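(* Let $X$ be a set and $\{d_r\colon X\times X\to\mathbb{R}_{\ge0}\cup\{\infty\}\}_{r>0}$ a family satisfying the weaker $\{d_r\}$-axioms (see context). If $p\colon U_p\to X$ is a plot of the diffeology induced by $\{d_r\}_{r>0}$ (see context), then $p$ is continuous, where $X$ carries the topology in which $W\subset X$ is open iff for every $x\in W$ there are $r,\varepsilon>0$ with $\{y\in X\mid d_r(x,y)<\varepsilon\}\subset W$.
   Context: The weaker $\{d_r\}$-axioms, required for all $x,y,z\in X$: (Self-distance) $d_r(x,x)=0$ for all $r>0$. (Upper semi-continuity) if $r_1\le r_2$ then $d_{r_1}(x,y)\le d_{r_2}(x,y)$; and if $d_r(x,y)<\varepsilon$ there is $\delta>0$ with $d_{r+\delta}(x,y)<\varepsilon$. (Weaker triangle inequality) for $r_1,r_2,r_3>0$, if $d_{r_1+r_2+r_3}(x,y)<r_3$ and $d_{r_1+r_2+r_3}(y,z)<r_2$, then $d_{r_1}(x,z)\le d_{r_1+r_2+r_3}(x,y)+d_{r_1+r_2+r_3}(y,z)$. Plots of the induced diffeology: a map $p\colon U_p\to X$ with $U_p$ open in some $\mathbb{R}^n$ such that for each $t_0\in U_p$ there is $\delta>0$ with (1) $t\mapsto d_r(p(t_0),p(t))$ real-valued and continuous on the open ball $B_\delta(t_0)$ for every $r>0$, and (2) for each $t_1\in B_\delta(t_0)\setminus p^{-1}(p(t_0))$ and each $r>0$, $t\mapsto d_r(p(t_1),p(t))$ is smooth at $t_0$. *)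

(* Defs.v *)
From HB Require Import structures.
From mathcomp Require Import all_boot all_order all_algebra.
From mathcomp Require Import all_classical all_reals all_analysis.
Set Implicit Arguments. Unset Strict Implicit. Unset Printing Implicit Defensive.
Import Order.TTheory GRing.Theory Num.Theory.
Import numFieldNormedType.Exports.
Local Open Scope classical_set_scope.
Local Open Scope ring_scope.

(* d r x y : the family {d_r}_{r>0}, valued in [0, +oo] (only r > 0 matters) *)
Definition weaker_dr_axioms (R : realType) (X : Type) (d : R -> X -> X -> \bar R) : Prop :=
  (forall r x y, 0 < r -> (0 <= d r x y)%E) /\
  (forall r x, 0 < r -> d r x x = 0%E) /\
  (* upper semi-continuity: monotonicity *)
  (forall r1 r2 x y, 0 < r1 -> r1 <= r2 -> (d r1 x y <= d r2 x y)%E) /\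
  (* upper semi-continuity: right continuity from above *)
  (forall r x y (eps : R), 0 < r -> (d r x y < eps%:E)%E ->
     exists delta : R, 0 < delta /\ (d (r + delta)%R x y < eps%:E)%E) /\
  (forall r1 r2 r3 x y z, 0 < r1 -> 0 < r2 -> 0 < r3 ->
     (d (r1 + r2 + r3)%R x y < r3%:E)%E -> (d (r1 + r2 + r3)%R y z < r2%:E)%E ->
     (d r1 x z <= d (r1 + r2 + r3)%R x y + d (r1 + r2 + r3)%R y z)%E).

Definition dr_open (R : realType) (X : Type) (d : R -> X -> X -> \bar R) (W : set X) : Prop :=
  forall x, W x -> exists r eps : R, 0 < r /\ 0 < eps /\
    [set y | (d r x y < eps%:E)%E] `<=` W.

Definition eball (R : realType) (n : nat) (t0 : 'rV[R]_n) (delta : R) : set 'rV[R]_n :=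
  [set t | \sum_(i < n) (t ord0 i - t0 ord0 i) ^+ 2 < delta ^+ 2].

Fixpoint iter_partial (R : realType) (n : nat) (vs : seq 'I_n) (f : 'rV[R]_n -> R)
  : 'rV[R]_n -> R :=
  match vs with
  | [::] => f
  | i :: vs' => fun x => 'D_(delta_mx 0 i) (iter_partial vs' f) x
  end.

Definition smooth_on (R : realType) (n : nat) (V : set 'rV[R]_n) (f : 'rV[R]_n -> R) : Prop :=
  (forall (vs : seq 'I_n) (i : 'I_n) x, V x ->
      derivable (iter_partial vs f) x (delta_mx 0 i)) /\
  (forall vs : seq 'I_n, {within V, continuous (iter_partial vs f)}).

Definition smooth_at (R : realType) (n : nat) (g : 'rV[R]_n -> \bar R) (t0 : 'rV[R]_n) : Prop :=
  exists (V : set 'rV[R]_n) (f : 'rV[R]_n -> R),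
    open V /\ V t0 /\ (forall t, V t -> g t = (f t)%:E) /\ smooth_on V f.

Definition is_dr_plot (R : realType) (X : Type) (d : R -> X -> X -> \bar R)
  (n : nat) (U : set 'rV[R]_n) (p : 'rV[R]_n -> X) : Prop :=
  open U /\
  forall t0, U t0 -> exists delta : R, 0 < delta /\ eball t0 delta `<=` U /\
    (forall r : R, 0 < r -> exists f : 'rV[R]_n -> R,
        (forall t, eball t0 delta t -> d r (p t0) (p t) = (f t)%:E) /\
        {within eball t0 delta, continuous f}) /\
    (forall t1, eball t0 delta t1 -> p t1 <> p t0 ->
       forall r : R, 0 < r -> smooth_at (fun t => d r (p t1) (p t)) t0).

(* Main.v *)
Require Import Defs.
From HB Require Import structures.
From mathcomp Require Import all_boot all_order all_algebra.
From mathcomp Require Import all_classical all_reals all_analysis.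
Import Order.TTheory GRing.Theory Num.Theory.
Import numFieldNormedType.Exports.
Local Open Scope classical_set_scope.
Local Open Scope ring_scope.

Lemma eball_nbhs (R : realType) (n : nat) (t0 : 'rV[R]_n) (delta : R) :
  0 < delta -> nbhs t0 (eball t0 delta).
Proof.
move=> d0.
pose g := fun t : 'rV[R]_n => \sum_(i < n) (t ord0 i - t0 ord0 i) ^+ 2.
have gc : continuous g.
  rewrite /g; apply: (@continuous_big R^o).
    exact: add_continuous.
  move=> i _ t.
  have h : continuous (fun t : 'rV[R]_n => t ord0 i - t0 ord0 i).
    move=> u.
    have h1 := @coord_continuous R 1 n ord0 i u.
    have h2 := (@cvgB _ R^o _ _ _ _ _ _ _ h1 (cvg_cst (t0 ord0 i))).
    exact: h2.
  exact: (continuousM (h t) (h t)).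
have g0 : g t0 = 0 by rewrite /g big1 // => i _; rewrite subrr expr2 mulr0.
have lt : g t0 < delta ^+ 2 by rewrite g0 exprn_gt0.
exact: (cvgr_lt _ (gc t0) _ lt).
Qed.

Theorem lemmaA1 (R : realType) (X : Type) (d : R -> X -> X -> \bar R)
  (n : nat) (U : set 'rV[R]_n) (p : 'rV[R]_n -> X) :
  weaker_dr_axioms d -> is_dr_plot d U p ->
  forall W : set X, dr_open d W -> open (U `&` p @^-1` W).
Proof.
move=> [_ [dself _]] [_ hp] W hW.
rewrite openE => t0 [Ut0 Wpt0].
have [r [eps [r0 [eps0 sW]]]] := hW _ Wpt0.
have [delta [d0 [sU [hf _]]]] := hp t0 Ut0.
have [f [hfe fc]] := hf r r0.
have nb := @eball_nbhs R n t0 delta d0.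
have ft0 : f t0 = 0.
  have := hfe t0 (nbhs_singleton nb); rewrite dself // => /esym.
  by case.
have fct : f @ t0 --> f t0.
  have := (subspace_continuousP _ _).1 fc t0 (nbhs_singleton nb).
  by rewrite within_interior.
have lt : f t0 < eps by rewrite ft0.
have nf := cvgr_lt _ fct _ lt.
rewrite /interior.
near=> t.
have et : eball t0 delta t by near: t.
have ft : f t < eps by near: t; exact: nf.
split; first exact: sU.
by apply: sW => /=; rewrite hfe // lte_fin.
Unshelve. all: by end_near.
Qed.
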